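(* The restriction of $\varepsilon$ to $\widehat{\operatorname{IET}^{\bowtie}}$ is a group homomorphism $\widehat{\operatorname{IET}^{\bowtie}}\to\mathbb{Z}/2\mathbb{Z}$.
   Context: $X=[0,1[$; $\widehat{\operatorname{PC}^{\bowtie}}$ is the group of bijections $X\to X$ continuous outside a finite subset, containing the group ${\mathfrak S}_{\mathrm{fin}}$ of finitely supported permutations with classical signature $\operatorname{sgn}$ valued in $\mathbb{Z}/2\mathbb{Z}$. $\widehat{\operatorname{IET}^{\bowtie}}$ is the subgroup of bijections $f$ for which there is a finite partition of $X$ into intervals $[a,b[$ such that on each $]a,b[$, $f$ has the form $x\mapsto x+c$ or $x\mapsto -x+c$. For $h\in\widehat{\operatorname{PC}^{\bowtie}}$, a partition associated with $h$ is a finite partition $\mathcal P=\{I_1,\dots,I_n\}$ of $X$ into intervals $I_j=[\alpha_j,b_j[$ such that $h$ is continuous on $I_j^\circ=]\alpha_j,b_j[$ for each $j$ (so $h$ is strictly monotone there and $h(I_j^\circ)$ is an open interval). Let $\beta_j$ be the left endpoint of $h(I_j^\circ)$; $\{h(\alpha_j)\}=\{\beta_j\}$, and $\sigma_{(h,\mathcal P)}\in{\mathfrak S}_{\mathrm{fin}}$ sends $h(\alpha_j)$ to $\beta_j$ for each $j$ and fixes all other points. $R(h,\mathcal P)$ is the number of $j$ with $h$ decreasing on $I_j^\circ$, and $\varepsilon(h,\mathcal P)=R(h,\mathcal P)+\operatorname{sgn}(\sigma_{(h,\mathcal P)})\bmod 2$. There is a unique associated partition $\mathcal P^{\min}_h$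 with the fewest intervals, every associated partition refines it, and $\varepsilon(h):=\varepsilon(h,\mathcal P^{\min}_h)$. *)

(* Defs.v *)
From Stdlib Require Import Reals Lra List Sorted ClassicalEpsilon.
From Coquelicot Require Import Coquelicot.
Import ListNotations.
Open Scope R_scope.

Definition X (x : R) : Prop := 0 <= x < 1.

(** Maps X -> X are represented by functions R -> R; only their values on X matter. *)
Definition bij_X (f : R -> R) : Prop :=
  (forall x, X x -> X (f x)) /\
  (forall x y, X x -> X y -> f x = f y -> x = y) /\
  (forall y, X y -> exists x, X x /\ f x = y).

(** A finite partition of X into intervals [a,b[ is given by its list of
    endpoints cs = [c_0; c_1; ...; c_n] with 0 = c_0 < c_1 < ... < c_n = 1;
    the intervals are I_j = [c_j, c_{j+1}[ for j < n. *)
Definition nb_int (cs : list R) : nat := (length cs - 1)%nat.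
Definition alpha (cs : list R) (j : nat) : R := nth j cs 0.
Definition bnd (cs : list R) (j : nat) : R := nth (S j) cs 0.

Definition is_partition (cs : list R) : Prop :=
  (2 <= length cs)%nat /\ nth 0 cs 0 = 0 /\ last cs 0 = 1 /\ Sorted Rlt cs.

Definition in_open (cs : list R) (j : nat) (x : R) : Prop :=
  alpha cs j < x < bnd cs j.

Definition PC (f : R -> R) : Prop :=
  bij_X f /\ exists F : list R,
    forall x, X x -> ~ In x F -> continuity_pt f x.

Definition IET (f : R -> R) : Prop :=
  bij_X f /\ exists cs, is_partition cs /\
    forall j, (j < nb_int cs)%nat ->
      (exists c, forall x, in_open cs j x -> f x = x + c) \/
      (exists c, forall x, in_open cs j x -> f x = - x + c).

Definition associated (h : R -> R) (cs : list R) : Prop :=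
  is_partition cs /\
  forall j, (j < nb_int cs)%nat -> forall x, in_open cs j x -> continuity_pt h x.

Definition beta (h : R -> R) (cs : list R) (j : nat) : R :=
  real (Glb_Rbar (fun y => exists x, in_open cs j x /\ y = h x)).

Definition decr_on (h : R -> R) (cs : list R) (j : nat) : Prop :=
  forall x y, in_open cs j x -> in_open cs j y -> x < y -> h y < h x.

Definition indices (cs : list R) : list nat := seq 0 (nb_int cs).

Definition Rnum (h : R -> R) (cs : list R) : nat :=
  length (filter (fun j => if excluded_middle_informative (decr_on h cs j)
                           then true else false) (indices cs)).

(** sigma_(h,P) sends h(alpha_j) to beta_j and fixes all other points; its
    signature is the parity of its number of inversions on the finite set
    {h(alpha_j)} (which contains its support): pairs of points
    h(alpha_i) < h(alpha_j) with sigma(h(alpha_i)) > sigma(h(alpha_j)). *)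
Definition sigma_inversions (h : R -> R) (cs : list R) : nat :=
  length (filter (fun p : nat * nat =>
     let (i, j) := p in
     if Rlt_dec (h (alpha cs i)) (h (alpha cs j)) then
       (if Rlt_dec (beta h cs j) (beta h cs i) then true else false)
     else false) (list_prod (indices cs) (indices cs))).

Definition sgn_sigma (h : R -> R) (cs : list R) : bool :=
  Nat.odd (sigma_inversions h cs).

(** epsilon(h,P) in Z/2Z = bool (addition = xorb) *)
Definition eps_P (h : R -> R) (cs : list R) : bool :=
  xorb (Nat.odd (Rnum h cs)) (sgn_sigma h cs).

Definition Pmin (h : R -> R) : list R :=
  epsilon (inhabits nil) (fun cs => associated h cs /\
     forall cs', associated h cs' -> (length cs <= length cs')%nat).

Definition eps (h : R -> R) : bool := eps_P h (Pmin h).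

(* Main.v *)
Require Import Defs.
From Stdlib Require Import Reals Lra Lia List Sorted Permutation ClassicalEpsilon Bool Arith.
From Coquelicot Require Import Coquelicot.
Import ListNotations.
Open Scope R_scope.

Definition XS (l : list nat) (f : nat -> bool) : bool :=
  fold_right (fun x acc => xorb (f x) acc) false l.

Lemma XS_app l m f : XS (l ++ m) f = xorb (XS l f) (XS m f).
Proof. induction l; simpl; auto. rewrite IHl. now rewrite xorb_assoc. Qed.

Lemma XS_ext_in l f g : (forall x, In x l -> f x = g x) -> XS l f = XS l g.
Proof. induction l; simpl; intros H; auto. rewrite H by auto. now rewrite IHl by auto. Qed.

Lemma XS_xor l f g : XS l (fun x => xorb (f x) (g x)) = xorb (XS l f) (XS l g).
Proof.
  induction l; simpl; auto. rewrite IHl.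
  destruct (f a), (g a), (XS l f), (XS l g); reflexivity.
Qed.

Lemma XS_false l : XS l (fun _ => false) = false.
Proof. induction l; simpl; auto. Qed.

Lemma XS_map l p f : XS (map p l) f = XS l (fun x => f (p x)).
Proof. induction l; simpl; auto. now rewrite IHl. Qed.

Lemma XS_perm l l' f : Permutation l l' -> XS l f = XS l' f.
Proof.
  induction 1; simpl; auto.
  - now rewrite IHPermutation.
  - destruct (f x), (f y); reflexivity.
  - congruence.
Qed.

Lemma XS_fubini l m (r : nat -> nat -> bool) :
  XS l (fun i => XS m (fun j => r i j)) = XS m (fun j => XS l (fun i => r i j)).
Proof.
  induction l; simpl.
  - now rewrite XS_false.
  - rewrite IHl. now rewrite <- XS_xor.
Qed.

Lemma XS_single l m : NoDup l -> In m l -> XS l (fun k => Nat.eqb k m) = true.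
Proof.
  induction 1; simpl; intros Hin; [contradiction|].
  destruct Hin as [<-|Hin].
  - rewrite Nat.eqb_refl. replace (XS l (fun k => Nat.eqb k x)) with false; auto.
    symmetry. rewrite <- (XS_false l). apply XS_ext_in. intros y Hy.
    destruct (Nat.eqb_spec y x); subst; auto. contradiction.
  - rewrite IHNoDup by auto. destruct (Nat.eqb_spec x m); subst; auto.
Qed.

Lemma odd_filter_XS l (p : nat -> bool) :
  Nat.odd (length (filter p l)) = XS l p.
Proof.
  induction l; simpl; auto. destruct (p a); simpl; auto.
  rewrite Nat.odd_succ, <- Nat.negb_odd, IHl; reflexivity.
Qed.

Lemma odd_filter_prod l m (r : nat * nat -> bool) :
  Nat.odd (length (filter r (list_prod l m))) = XS l (fun i => XS m (fun j => r (i, j))).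
Proof.
  induction l; simpl; auto.
  rewrite filter_app, length_app, Nat.odd_add, IHl. f_equal.
  clear. induction m; simpl; auto. destruct (r (a, a0)); simpl; auto.
  rewrite Nat.odd_succ, <- Nat.negb_odd, IHm. reflexivity.
Qed.

Definition idx n := seq 0 n.
Definition X2 n (r : nat -> nat -> bool) : bool :=
  XS (seq 0 n) (fun i => XS (seq 0 n) (fun j => r i j)).

Lemma X2_ext n r r' : (forall i j, (i < n)%nat -> (j < n)%nat -> r i j = r' i j) -> X2 n r = X2 n r'.
Proof.
  intros H. unfold X2. apply XS_ext_in. intros i Hi. apply XS_ext_in. intros j Hj.
  apply in_seq in Hi, Hj. apply H; lia.
Qed.

Lemma X2_xor n r r' : X2 n (fun i j => xorb (r i j) (r' i j)) = xorb (X2 n r) (X2 n r').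
Proof.
  unfold X2. rewrite <- XS_xor. apply XS_ext_in. intros. apply XS_xor.
Qed.

Lemma X2_swap n r : X2 n (fun i j => r j i) = X2 n r.
Proof. unfold X2. now rewrite XS_fubini. Qed.

Definition isperm n (p : nat -> nat) : Prop :=
  (forall i, (i < n)%nat -> (p i < n)%nat) /\
  (forall i j, (i < n)%nat -> (j < n)%nat -> p i = p j -> i = j).

Lemma isperm_Perm n p : isperm n p -> Permutation (map p (seq 0 n)) (seq 0 n).
Proof.
  intros [H1 H2]. apply NoDup_Permutation_bis.
  - apply NoDup_map_NoDup_ForallPairs; [|apply seq_NoDup].
    intros i j Hi Hj. apply in_seq in Hi, Hj. apply H2; lia.
  - now rewrite length_map.
  - intros x Hx. apply in_map_iff in Hx. destruct Hx as [i [<- Hi]].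
    apply in_seq in Hi. apply in_seq. specialize (H1 i). lia.
Qed.

Lemma isperm_surj n p : isperm n p -> forall k, (k < n)%nat -> exists i, (i < n)%nat /\ p i = k.
Proof.
  intros Hp k Hk. assert (In k (map p (seq 0 n))).
  { eapply Permutation_in. symmetry. apply isperm_Perm; auto. apply in_seq; lia. }
  apply in_map_iff in H. destruct H as [i [<- Hi]]. apply in_seq in Hi. exists i; split; auto; lia.
Qed.

Lemma XS_reindex n p f : isperm n p -> XS (seq 0 n) (fun i => f (p i)) = XS (seq 0 n) f.
Proof. intros Hp. rewrite <- XS_map. apply XS_perm. now apply isperm_Perm. Qed.

Lemma X2_reindex n p r : isperm n p -> X2 n (fun i j => r (p i) (p j)) = X2 n r.
Proof.
  intros Hp. unfold X2.
  rewrite (XS_ext_in _ _ (fun i => XS (seq 0 n) (fun j => r (p i) j))).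
  - apply (XS_reindex n p (fun i => XS (seq 0 n) (fun j => r i j))); auto.
  - intros i _. apply (XS_reindex n p (fun j => r (p i) j)); auto.
Qed.

Definition condb (u v : nat -> R) (i j : nat) : bool :=
  if Rlt_dec (u i) (u j) then (if Rlt_dec (v j) (v i) then true else false) else false.

Definition ltR (a b : R) : bool := if Rlt_dec a b then true else false.

Definition T n (u : nat -> R) : bool := X2 n (fun i j => andb (Nat.ltb i j) (ltR (u j) (u i))).

Definition injn n (u : nat -> R) : Prop :=
  forall i j, (i < n)%nat -> (j < n)%nat -> u i = u j -> i = j.

Lemma cocycle n u v : injn n u -> injn n v -> X2 n (condb u v) = xorb (T n u) (T n v).
Proof.
  intros Hu Hv.
  rewrite (X2_ext n (condb u v) (fun i j => xorb (andb (Nat.ltb i j) (condb u v i j))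
      (andb (Nat.ltb j i) (condb u v i j)))).
  2:{ intros i j Hi Hj. destruct (Nat.ltb_spec i j), (Nat.ltb_spec j i); simpl;
      try (destruct (condb u v i j); reflexivity); try lia.
      assert (i = j) by lia. subst. unfold condb. destruct (Rlt_dec (u j) (u j)); [lra|reflexivity]. }
  rewrite X2_xor.
  rewrite <- (X2_swap n (fun i j => (Nat.ltb j i && condb u v i j)%bool)).
  rewrite <- X2_xor. unfold T. rewrite <- X2_xor. apply X2_ext. intros i j Hi Hj.
  destruct (Nat.ltb_spec i j); simpl; auto.
  assert (u i <> u j) by (intro E; apply Hu in E; auto; lia).
  assert (v i <> v j) by (intro E; apply Hv in E; auto; lia).
  unfold condb, ltR.
  destruct (Rlt_dec (u i) (u j)), (Rlt_dec (v j) (v i)), (Rlt_dec (u j) (u i)), (Rlt_dec (v i) (v j));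
    simpl; auto; lra.
Qed.

Lemma injn_comp n u p : injn n u -> isperm n p -> injn n (fun i => u (p i)).
Proof. intros Hu [H1 H2] i j Hi Hj E. apply H2; auto. Qed.

Lemma X2_condb_reindex n p u v : isperm n p ->
  X2 n (condb (fun i => u (p i)) (fun i => v (p i))) = X2 n (condb u v).
Proof. intros Hp. apply (X2_reindex n p (condb u v) Hp). Qed.

Definition iota (i : nat) : R := INR i.

Lemma injn_iota n : injn n iota.
Proof. intros i j _ _ E. now apply INR_eq. Qed.

Lemma conj_lemma n c p : injn n c -> isperm n p ->
  X2 n (condb c (fun i => c (p i))) = X2 n (condb iota (fun i => iota (p i))).
Proof.
  intros Hc Hp.
  rewrite !cocycle; auto using injn_comp, injn_iota.
  assert (E : X2 n (condb (fun i => c (p i)) (fun i => iota (p i))) = X2 n (condb c iota))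
    by now apply X2_condb_reindex.
  rewrite !cocycle in E; auto using injn_comp, injn_iota.
  destruct (T n c), (T n iota), (T n (fun i => c (p i))), (T n (fun i => iota (p i))); simpl in *; auto.
Qed.

Definition insf {A} (p : nat) (f : nat -> A) (y : A) (k : nat) : A :=
  if Nat.ltb k p then f k else if Nat.eqb k p then y else f (k - 1)%nat.
Definition snoc {A} (n : nat) (f : nat -> A) (y : A) (k : nat) : A :=
  if Nat.ltb k n then f k else y.
Definition shp (n p k : nat) : nat :=
  if Nat.ltb k p then k else if Nat.ltb k n then S k else p.

Lemma shp_perm n p : (p <= n)%nat -> isperm (S n) (shp n p).
Proof.
  intros Hp. split.
  - intros i Hi. unfold shp. destruct (Nat.ltb_spec i p), (Nat.ltb_spec i n); lia.
  - intros i j Hi Hj. unfold shp.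
    destruct (Nat.ltb_spec i p), (Nat.ltb_spec i n), (Nat.ltb_spec j p), (Nat.ltb_spec j n); lia.
Qed.

Lemma insf_shp {A} n p (f : nat -> A) y k : (p <= n)%nat -> (k <= n)%nat ->
  insf p f y (shp n p k) = snoc n f y k.
Proof.
  intros Hp Hk. unfold insf, shp, snoc.
  destruct (Nat.ltb_spec k p).
  - destruct (Nat.ltb_spec k p); try lia. destruct (Nat.ltb_spec k n); try lia. auto.
  - destruct (Nat.ltb_spec k n).
    + destruct (Nat.ltb_spec (S k) p); try lia. destruct (Nat.eqb_spec (S k) p); try lia.
      f_equal; lia.
    + destruct (Nat.ltb_spec p p); try lia. now rewrite Nat.eqb_refl.
Qed.

Lemma XS_snoc n f y : XS (seq 0 (S n)) (snoc n f y) = xorb (XS (seq 0 n) f) y.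
Proof.
  rewrite seq_S, XS_app. simpl. unfold snoc at 2. rewrite Nat.ltb_irrefl, xorb_false_r.
  f_equal. apply XS_ext_in. intros i Hi. apply in_seq in Hi. unfold snoc.
  destruct (Nat.ltb_spec i n); auto; lia.
Qed.

Lemma XS_insf n p f y : (p <= n)%nat -> XS (seq 0 (S n)) (insf p f y) = xorb (XS (seq 0 n) f) y.
Proof.
  intros Hp. rewrite <- (XS_reindex (S n) (shp n p)) by now apply shp_perm.
  rewrite <- XS_snoc. apply XS_ext_in. intros k Hk. apply in_seq in Hk.
  apply insf_shp; lia.
Qed.

Lemma X2_S n r : X2 (S n) r =
  xorb (X2 n r) (xorb (XS (seq 0 n) (fun i => xorb (r i n) (r n i))) (r n n)).
Proof.
  unfold X2. rewrite seq_S, XS_app. simpl. rewrite xorb_false_r.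
  rewrite (XS_ext_in _ _ (fun i => xorb (XS (seq 0 n) (fun j => r i j)) (r i n))).
  2:{ intros. now rewrite XS_app; simpl; rewrite xorb_false_r. }
  rewrite XS_app; simpl; rewrite xorb_false_r.
  rewrite XS_xor, XS_xor.
  destruct (XS (seq 0 n) (fun i => XS (seq 0 n) (fun j => r i j))),
    (XS (seq 0 n) (fun i => r i n)), (XS (seq 0 n) (fun j => r n j)), (r n n); reflexivity.
Qed.

Lemma X2_snoc_condb n u v y rho : isperm n rho ->
  (forall i, (i < n)%nat -> v i = u (rho i)) ->
  (forall i, (i < n)%nat -> y <> u i) ->
  (forall i, (i < n)%nat -> y <> v i) ->
  X2 (S n) (condb (snoc n u y) (snoc n v y)) = X2 n (condb u v).
Proof.
  intros Hr Hv Hu1 Hv1. rewrite X2_S.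
  assert (E1 : X2 n (condb (snoc n u y) (snoc n v y)) = X2 n (condb u v)).
  { apply X2_ext. intros i j Hi Hj. unfold condb, snoc.
    destruct (Nat.ltb_spec i n), (Nat.ltb_spec j n); try lia. reflexivity. }
  rewrite E1.
  assert (E2 : condb (snoc n u y) (snoc n v y) n n = false).
  { unfold condb. destruct (Rlt_dec _ _); auto. lra. }
  rewrite E2, xorb_false_r.
  rewrite (XS_ext_in _ _ (fun i => xorb (ltR (u i) y) (ltR (v i) y))).
  - rewrite XS_xor.
    rewrite (XS_ext_in _ (fun i => ltR (v i) y) (fun i => ltR (u (rho i)) y)).
    + rewrite (XS_reindex n rho (fun i => ltR (u i) y)) by auto.
      now rewrite xorb_nilpotent, xorb_false_r.
    + intros i Hi. apply in_seq in Hi. rewrite Hv; auto; lia.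
  - intros i Hi. apply in_seq in Hi. unfold condb, snoc, ltR.
    rewrite Nat.ltb_irrefl. destruct (Nat.ltb_spec i n); try lia.
    specialize (Hu1 i ltac:(lia)). specialize (Hv1 i ltac:(lia)).
    destruct (Rlt_dec (u i) y), (Rlt_dec y (v i)), (Rlt_dec y (u i)), (Rlt_dec (v i) y);
      simpl; auto; lra.
Qed.

Lemma X2_insf_condb n p u v y rho : (p <= n)%nat -> isperm n rho ->
  (forall i, (i < n)%nat -> v i = u (rho i)) ->
  (forall i, (i < n)%nat -> y <> u i) ->
  (forall i, (i < n)%nat -> y <> v i) ->
  X2 (S n) (condb (insf p u y) (insf p v y)) = X2 n (condb u v).
Proof.
  intros Hp Hr Hv Hu1 Hv1.
  rewrite <- (X2_condb_reindex (S n) (shp n p)) by now apply shp_perm.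
  rewrite <- (X2_snoc_condb n u v y rho); auto.
  apply X2_ext. intros i j Hi Hj. unfold condb. rewrite !insf_shp by lia. reflexivity.
Qed.

Definition tau (j k : nat) : nat :=
  if Nat.eqb k j then S j else if Nat.eqb k (S j) then j else k.

Lemma tau_perm n j : (S j < n)%nat -> isperm n (tau j).
Proof.
  intros H. split.
  - intros i Hi. unfold tau. destruct (Nat.eqb_spec i j), (Nat.eqb_spec i (S j)); lia.
  - intros i k Hi Hk. unfold tau.
    destruct (Nat.eqb_spec i j), (Nat.eqb_spec i (S j)), (Nat.eqb_spec k j), (Nat.eqb_spec k (S j)); lia.
Qed.

Lemma ltR_INR a b : ltR (INR a) (INR b) = Nat.ltb a b.
Proof.
  unfold ltR. destruct (Rlt_dec (INR a) (INR b)), (Nat.ltb_spec a b); auto.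
  - apply INR_lt in r. lia.
  - exfalso. apply n. now apply lt_INR.
Qed.

Lemma X2_tau n j : (S j < n)%nat -> X2 n (condb iota (fun i => iota (tau j i))) = true.
Proof.
  intros H.
  rewrite (X2_ext n _ (fun i k => andb (Nat.eqb i j) (Nat.eqb k (S j)))).
  - unfold X2. rewrite (XS_ext_in _ _ (fun i => Nat.eqb i j)).
    + apply XS_single. apply seq_NoDup. apply in_seq. lia.
    + intros i Hi. destruct (Nat.eqb_spec i j); simpl; auto.
      * apply XS_single. apply seq_NoDup. apply in_seq. lia.
      * apply XS_false.
  - intros i k Hi Hk. unfold condb, iota.
    change (ltR (INR i) (INR k) && ltR (INR (tau j k)) (INR (tau j i)) = (Nat.eqb i j && Nat.eqb k (S j)))%bool
      || idtac.
    assert (A1 : (if Rlt_dec (INR i) (INR k) then if Rlt_dec (INR (tau j k)) (INR (tau j i)) then true else false else false)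
       = andb (ltR (INR i) (INR k)) (ltR (INR (tau j k)) (INR (tau j i)))).
    { unfold ltR. destruct (Rlt_dec _ _), (Rlt_dec _ _); auto. }
    rewrite A1, !ltR_INR. unfold tau.
    destruct (Nat.eqb_spec i j), (Nat.eqb_spec i (S j)), (Nat.eqb_spec k j), (Nat.eqb_spec k (S j));
      subst; simpl;
      repeat match goal with |- context [Nat.ltb ?a ?b] => destruct (Nat.ltb_spec a b) end;
      simpl; auto; lia.
Qed.

Lemma Rlt_trans' : Relations_1.Transitive Rlt.
Proof. intros a b c; apply Rlt_trans. Qed.

Lemma SS_of l : Sorted Rlt l -> StronglySorted Rlt l.
Proof. apply Sorted_StronglySorted, Rlt_trans'. Qed.

Lemma ss_nth l : StronglySorted Rlt l -> forall i j, (i < j)%nat -> (j < length l)%nat ->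
  nth i l 0 < nth j l 0.
Proof.
  induction 1; simpl; intros i j Hij Hj; [lia|].
  destruct i, j; try lia.
  - apply Forall_forall with (x := nth j l 0) in H0; auto. apply nth_In; lia.
  - apply IHStronglySorted; lia.
Qed.

Lemma sorted_nth l : Sorted Rlt l -> forall i j, (i < j)%nat -> (j < length l)%nat ->
  nth i l 0 < nth j l 0.
Proof. intros H. apply ss_nth, SS_of, H. Qed.

Lemma sorted_nth_le l : Sorted Rlt l -> forall i j, (i <= j)%nat -> (j < length l)%nat ->
  nth i l 0 <= nth j l 0.
Proof. intros H i j H1 H2. destruct (Nat.eq_dec i j). subst; lra. left; apply sorted_nth; auto; lia. Qed.

Lemma nth_sorted l : (forall k, (S k < length l)%nat -> nth k l 0 < nth (S k) l 0) -> Sorted Rlt l.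
Proof.
  induction l as [|a l IH]; intros H; constructor.
  - apply IH. intros k Hk. apply (H (S k)). simpl; lia.
  - destruct l as [|b l]; constructor. apply (H 0%nat). simpl; lia.
Qed.

Lemma last_nth {A} (l : list A) (d : A) : last l d = nth (length l - 1) l d.
Proof.
  induction l as [|a l IH]; auto.
  destruct l as [|b l]; auto. change (last (b :: l) d = nth (length (a :: b :: l) - 1) (a :: b :: l) d).
  rewrite IH. simpl. rewrite Nat.sub_0_r. reflexivity.
Qed.

Section Part.
Variable cs : list R.
Hypothesis Hp : is_partition cs.

Lemma part_len : length cs = S (nb_int cs).
Proof. destruct Hp as [H _]. unfold nb_int. lia. Qed.

Lemma part_sorted : Sorted Rlt cs.
Proof. apply Hp. Qed.

Lemma part_first : nth 0 cs 0 = 0.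
Proof. apply Hp. Qed.

Lemma part_last : nth (nb_int cs) cs 0 = 1.
Proof. destruct Hp as [H1 [H2 [H3 H4]]]. rewrite last_nth in H3. unfold nb_int. auto. Qed.

Lemma part_npos : (0 < nb_int cs)%nat.
Proof. destruct Hp as [H _]. unfold nb_int. lia. Qed.

Lemma part_nth_lt i j : (i < j)%nat -> (j <= nb_int cs)%nat -> nth i cs 0 < nth j cs 0.
Proof. intros. apply sorted_nth; auto using part_sorted. rewrite part_len; lia. Qed.

Lemma part_nth_le i j : (i <= j)%nat -> (j <= nb_int cs)%nat -> nth i cs 0 <= nth j cs 0.
Proof. intros. apply sorted_nth_le; auto using part_sorted. rewrite part_len; lia. Qed.

Lemma part_nth_range i : (i <= nb_int cs)%nat -> 0 <= nth i cs 0 <= 1.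
Proof.
  intros H. pose proof part_first. pose proof part_last.
  pose proof (part_nth_le 0 i ltac:(lia) H). pose proof (part_nth_le i (nb_int cs) H ltac:(lia)). lra.
Qed.

Lemma alpha_bnd j : (j < nb_int cs)%nat -> alpha cs j < bnd cs j.
Proof. intros. unfold alpha, bnd. apply part_nth_lt; lia. Qed.

Lemma alpha_range j : (j < nb_int cs)%nat -> 0 <= alpha cs j < 1.
Proof.
  intros. unfold alpha. split. apply part_nth_range; lia.
  pose proof part_last. pose proof (part_nth_lt j (nb_int cs) H ltac:(lia)). lra.
Qed.

Lemma bnd_range j : (j < nb_int cs)%nat -> 0 < bnd cs j <= 1.
Proof.
  intros. pose proof (alpha_range j H). pose proof (alpha_bnd j H).
  split. lra. unfold bnd. apply part_nth_range; lia.
Qed.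

Lemma alpha_inj j k : (j < nb_int cs)%nat -> (k < nb_int cs)%nat -> alpha cs j = alpha cs k -> j = k.
Proof.
  intros Hj Hk E. unfold alpha in E. destruct (lt_eq_lt_dec j k) as [[H|H]|H]; auto.
  - pose proof (part_nth_lt j k H ltac:(lia)). lra.
  - pose proof (part_nth_lt k j H ltac:(lia)). lra.
Qed.

Lemma pieces_disj j k : (j < k)%nat -> (k < nb_int cs)%nat -> bnd cs j <= alpha cs k.
Proof. intros. unfold bnd, alpha. apply part_nth_le; lia. Qed.

Lemma open_disj j k x : (j < nb_int cs)%nat -> (k < nb_int cs)%nat ->
  in_open cs j x -> in_open cs k x -> j = k.
Proof.
  unfold in_open. intros Hj Hk H1 H2. destruct (lt_eq_lt_dec j k) as [[H|H]|H]; auto.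
  - pose proof (pieces_disj j k H Hk). lra.
  - pose proof (pieces_disj k j H Hj). lra.
Qed.

Lemma elem_ge_bnd y j : In y cs -> (j < nb_int cs)%nat -> alpha cs j < y -> bnd cs j <= y.
Proof.
  intros Hy Hj Hlt. apply (In_nth _ _ 0) in Hy. destruct Hy as [m [Hm <-]].
  rewrite part_len in Hm. unfold alpha, bnd in *.
  destruct (le_lt_dec m j).
  - pose proof (part_nth_le m j l ltac:(lia)). lra.
  - apply part_nth_le; lia.
Qed.

Lemma elem_not_open y j : In y cs -> (j < nb_int cs)%nat -> ~ in_open cs j y.
Proof. intros Hy Hj [H1 H2]. pose proof (elem_ge_bnd y j Hy Hj H1). lra. Qed.

Lemma alpha_in j : (j < nb_int cs)%nat -> In (alpha cs j) cs.
Proof. intros. unfold alpha. apply nth_In. rewrite part_len; lia. Qed.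
Lemma bnd_in j : (j < nb_int cs)%nat -> In (bnd cs j) cs.
Proof. intros. unfold bnd. apply nth_In. rewrite part_len; lia. Qed.

Lemma elem_range y : In y cs -> 0 <= y <= 1.
Proof.
  intros Hy. apply (In_nth _ _ 0) in Hy. destruct Hy as [m [Hm <-]].
  rewrite part_len in Hm. apply part_nth_range; lia.
Qed.

Lemma locate x : 0 <= x < 1 -> exists j, (j < nb_int cs)%nat /\ alpha cs j <= x < bnd cs j.
Proof.
  intros Hx. unfold alpha, bnd.
  assert (G : forall m, (m <= nb_int cs)%nat -> nth m cs 0 <= x ->
            exists j, (j < nb_int cs)%nat /\ nth j cs 0 <= x < nth (S j) cs 0).
  { intros m. remember (nb_int cs - m)%nat as d. revert m Heqd.
    induction d; intros m Hd Hm Hle.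
    - assert (m = nb_int cs) by lia. subst. rewrite part_last in Hle. lra.
    - destruct (Rlt_le_dec x (nth (S m) cs 0)).
      + exists m. split; [lia|lra].
      + apply (IHd (S m)); auto; lia. }
  apply (G 0%nat); [lia|]. rewrite part_first. lra.
Qed.

End Part.

Lemma sorted_unique l1 l2 : Sorted Rlt l1 -> Sorted Rlt l2 ->
  (forall y, In y l1 <-> In y l2) -> l1 = l2.
Proof.
  intros H1 H2. apply SS_of in H1, H2. revert l2 H2.
  induction H1 as [|a l1 H1 IH Ha]; intros l2 H2 E.
  - destruct l2 as [|b l2]; auto. exfalso. apply (E b). simpl; auto.
  - destruct H2 as [|b l2 H2 Hb].
    + exfalso. apply (E a). simpl; auto.
    + assert (a = b).
      { assert (Ia : In a (b :: l2)) by (apply E; simpl; auto).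
        assert (Ib : In b (a :: l1)) by (apply E; simpl; auto).
        destruct Ia as [->|Ia]; auto. destruct Ib as [->|Ib]; auto.
        rewrite Forall_forall in Ha, Hb. specialize (Ha _ Ib). specialize (Hb _ Ia). lra. }
      subst. f_equal. apply IH; auto. intros y. split; intros Hy.
      * assert (In y (b :: l2)) by (apply E; simpl; auto). destruct H as [<-|H]; auto.
        rewrite Forall_forall in Ha. specialize (Ha _ Hy). lra.
      * assert (In y (b :: l1)) by (apply E; simpl; auto). destruct H as [<-|H]; auto.
        rewrite Forall_forall in Hb. specialize (Hb _ Hy). lra.
Qed.

Lemma partition_char l : Sorted Rlt l -> In 0 l -> In 1 l -> (forall y, In y l -> 0 <= y <= 1) ->
  is_partition l.
Proof.
  intros Hs H0 H1 Hr. pose proof (SS_of _ Hs) as Hss.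
  assert (Hlen : (2 <= length l)%nat).
  { destruct l as [|a [|b l]]; simpl in *; try tauto; try lia.
    destruct H0, H1; try tauto; subst; lra. }
  split; [auto|split; [|split; [|auto]]].
  - destruct l as [|a l]; [simpl in H0; tauto|]. simpl.
    destruct H0 as [->|H0]; auto. inversion Hss; subst. rewrite Forall_forall in H4.
    specialize (H4 _ H0). specialize (Hr a (or_introl eq_refl)). lra.
  - rewrite last_nth. apply (In_nth _ _ 0) in H1. destruct H1 as [m [Hm Em]].
    destruct (Nat.eq_dec m (length l - 1)). subst; auto.
    pose proof (sorted_nth l Hs m (length l - 1) ltac:(lia) ltac:(lia)).
    pose proof (Hr (nth (length l - 1) l 0) ltac:(apply nth_In; lia)). lra.
Qed.

Lemma refine_piece P P' : is_partition P -> is_partition P' -> (forall y, In y P -> In y P') ->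
  forall k, (k < nb_int P')%nat -> exists j, (j < nb_int P)%nat /\
    alpha P j <= alpha P' k /\ bnd P' k <= bnd P j.
Proof.
  intros HP HP' Hinc k Hk. destruct (locate P HP (alpha P' k)) as [j [Hj [H1 H2]]].
  { apply alpha_range; auto. }
  exists j. split; auto. split; auto.
  (* bnd P j is in P' and > alpha P' k *)
  apply (elem_ge_bnd P' HP' (bnd P j) k); auto. apply Hinc, bnd_in; auto.
Qed.

Definition insl (cs : list R) (j : nat) (x : R) := firstn (S j) cs ++ x :: skipn (S j) cs.

Lemma insl_nth cs j x k : (S j <= length cs)%nat ->
  nth k (insl cs j x) 0 = insf (S j) (fun k => nth k cs 0) x k.
Proof.
  intros H. unfold insl, insf.
  destruct (Nat.ltb_spec k (S j)).
  - rewrite app_nth1 by (rewrite firstn_length_le; lia). rewrite nth_firstn.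
    destruct (Nat.ltb_spec k (S j)); auto; lia.
  - rewrite app_nth2 by (rewrite firstn_length_le; lia). rewrite firstn_length_le by lia.
    destruct (Nat.eqb_spec k (S j)).
    + subst. rewrite Nat.sub_diag. reflexivity.
    + replace (k - S j)%nat with (S (k - S j - 1)) by lia.
      change (nth (k - S j - 1) (skipn (S j) cs) 0 = nth (k - 1) cs 0).
      rewrite nth_skipn. f_equal. lia.
Qed.

Lemma insl_len cs j x : (S j <= length cs)%nat -> length (insl cs j x) = S (length cs).
Proof.
  intros H. unfold insl. rewrite length_app. rewrite firstn_length_le by lia.
  change (length (x :: skipn (S j) cs)) with (S (length (skipn (S j) cs))).
  pose proof (firstn_skipn (S j) cs) as E. apply (f_equal (@length R)) in E.
  rewrite length_app, firstn_length_le in E by lia. lia.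
Qed.

Lemma insl_in cs j x y : In y (insl cs j x) <-> y = x \/ In y cs.
Proof.
  unfold insl. rewrite in_app_iff.
  change (In y (x :: skipn (S j) cs)) with (x = y \/ In y (skipn (S j) cs)).
  rewrite <- (firstn_skipn (S j) cs) at 3. rewrite in_app_iff. split; intros [A|[A|A]]; auto.
Qed.

Lemma insl_part cs j x : is_partition cs -> (j < nb_int cs)%nat -> alpha cs j < x < bnd cs j ->
  is_partition (insl cs j x).
Proof.
  intros Hp Hj Hx. pose proof (part_len cs Hp) as Hl.
  apply partition_char.
  - apply nth_sorted. intros k Hk. rewrite insl_len in Hk by lia.
    rewrite !insl_nth by lia. unfold insf. unfold alpha, bnd in Hx.
    destruct (Nat.ltb_spec k (S j)), (Nat.ltb_spec (S k) (S j)), (Nat.eqb_spec k (S j)), (Nat.eqb_spec (S k) (S j));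
      try lia.
    + apply part_nth_lt; auto; lia.
    + assert (k = j) by lia. subst. lra.
    + subst. replace (S (S j) - 1)%nat with (S j) by lia. lra.
    + replace (S k - 1)%nat with k by lia. apply part_nth_lt; auto; lia.
  - apply insl_in. right. rewrite <- (part_first cs Hp). apply nth_In. lia.
  - apply insl_in. right. rewrite <- (part_last cs Hp). apply nth_In. lia.
  - intros y Hy. apply insl_in in Hy. destruct Hy as [->|Hy].
    + pose proof (alpha_range cs Hp j Hj). pose proof (bnd_range cs Hp j Hj). lra.
    + apply (elem_range cs Hp); auto.
Qed.

Definition aff (h : R -> R) (a b : R) : Prop :=
  exists s c, (s = 1 \/ s = -1) /\ forall x, a < x < b -> h x = s * x + c.

Definition affine_part (h : R -> R) (cs : list R) : Prop :=
  is_partition cs /\ forall j, (j < nb_int cs)%nat -> aff h (alpha cs j) (bnd cs j).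

Definition glbf (h : R -> R) (a b : R) : R :=
  real (Glb_Rbar (fun y => exists x, (a < x < b) /\ y = h x)).

Lemma beta_glbf h cs j : beta h cs j = glbf h (alpha cs j) (bnd cs j).
Proof. reflexivity. Qed.

Definition dbab (h : R -> R) (a b : R) : bool :=
  if excluded_middle_informative (forall x y, a < x < b -> a < y < b -> x < y -> h y < h x)
  then true else false.

Lemma Rnum_dbab h cs : Rnum h cs = length (filter (fun j => dbab h (alpha cs j) (bnd cs j)) (indices cs)).
Proof. reflexivity. Qed.

Definition mlow (s c a b : R) := (s * (a + b) - (b - a)) / 2 + c.

Lemma img_aff h a b s c : a < b -> (s = 1 \/ s = -1) -> (forall x, a < x < b -> h x = s * x + c) ->
  forall y, (exists x, (a < x < b) /\ y = h x) <-> mlow s c a b < y < mlow s c a b + (b - a).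
Proof.
  intros Hab Hs Hh y. unfold mlow. split.
  - intros [x [Hx ->]]. rewrite Hh by auto. destruct Hs; subst; lra.
  - intros Hy. exists (s * (y - c)).
    assert (Hx : a < s * (y - c) < b) by (destruct Hs; subst; lra).
    split; auto. rewrite Hh by auto. destruct Hs; subst; lra.
Qed.

Lemma glb_open (E : R -> Prop) m M : m < M -> (forall y, E y <-> m < y < M) -> real (Glb_Rbar E) = m.
Proof.
  intros HmM HE. rewrite (is_glb_Rbar_unique E (Finite m)); auto.
  split.
  - intros y Hy. apply HE in Hy. simpl. lra.
  - intros b Hb. destruct b as [r| |]; simpl; auto.
    + destruct (Rle_dec r m); auto. exfalso.
      set (y := m + Rmin (r - m) (M - m) / 2).
      assert (m < y < M). { unfold y. pose proof (Rmin_r (r - m) (M - m)). pose proof (Rmin_glb_lt (r-m) (M-m) 0). lra. }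
      specialize (Hb y (proj2 (HE y) H)). simpl in Hb.
      unfold y in Hb. pose proof (Rmin_l (r - m) (M - m)). pose proof (Rmin_glb_lt (r-m) (M-m) 0). lra.
    + specialize (Hb ((m + M) / 2)). simpl in Hb. apply Hb, HE. lra.
Qed.

Lemma glbf_aff h a b s c : a < b -> (s = 1 \/ s = -1) -> (forall x, a < x < b -> h x = s * x + c) ->
  glbf h a b = mlow s c a b.
Proof.
  intros. unfold glbf. apply (glb_open _ _ (mlow s c a b + (b - a))). lra.
  apply img_aff; auto.
Qed.

Lemma dbab_aff h a b s c : a < b -> (s = 1 \/ s = -1) -> (forall x, a < x < b -> h x = s * x + c) ->
  dbab h a b = ltR s 0.
Proof.
  intros Hab Hs Hh. unfold dbab, ltR.
  destruct (excluded_middle_informative _) as [D|D]; destruct (Rlt_dec s 0); auto.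
  - exfalso. assert (s = 1) by (destruct Hs; lra). subst.
    specialize (D (a + (b-a)/3) (a + 2*(b-a)/3) ltac:(lra) ltac:(lra) ltac:(lra)).
    rewrite !Hh in D by lra. lra.
  - exfalso. apply D. intros x y Hx Hy Hxy. rewrite !Hh by auto. destruct Hs; subst; lra.
Qed.

Lemma aff_cont h a b : aff h a b -> forall x, a < x < b -> continuity_pt h x.
Proof.
  intros [s [c [Hs Hh]]] x Hx.
  unfold continuity_pt, continue_in, limit1_in, limit_in. intros eps Heps.
  exists (Rmin eps (Rmin (x - a) (b - x))). split.
  - apply Rmin_glb_lt; auto. apply Rmin_glb_lt; lra.
  - intros y [_ Hy]. simpl in *. unfold R_dist in *.
    pose proof (Rmin_l eps (Rmin (x - a) (b - x))). pose proof (Rmin_r eps (Rmin (x - a) (b - x))).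
    pose proof (Rmin_l (x - a) (b - x)). pose proof (Rmin_r (x - a) (b - x)).
    assert (Hy' : a < y < b).
    { unfold Rabs in Hy; destruct (Rcase_abs (y - x)); lra. }
    rewrite !Hh by auto.
    unfold Rabs in *; destruct (Rcase_abs (y - x)), (Rcase_abs (s * y + c - (s * x + c))); destruct Hs; subst; lra.
Qed.

Lemma cont_left h p d s c : continuity_pt h d -> p < d -> (s = 1 \/ s = -1) ->
  (forall x, p < x < d -> h x = s * x + c) -> h d = s * d + c.
Proof.
  intros Hc Hpd Hs Hh. destruct (Req_dec (h d) (s * d + c)) as [E|E]; auto. exfalso.
  set (e := s * d + c - h d).
  assert (HD : 0 < Rabs e) by (apply Rabs_pos_lt; unfold e; lra).
  destruct (Hc (Rabs e / 2) ltac:(lra)) as [alp [Ha Hal]].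
  assert (Ht : exists t, 0 < t /\ t < alp /\ t < d - p /\ t < Rabs e / 2).
  { exists (Rmin alp (Rmin (d - p) (Rabs e / 2)) / 2).
    pose proof (Rmin_l alp (Rmin (d - p) (Rabs e / 2))). pose proof (Rmin_r alp (Rmin (d - p) (Rabs e / 2))).
    pose proof (Rmin_l (d - p) (Rabs e / 2)). pose proof (Rmin_r (d - p) (Rabs e / 2)).
    assert (0 < Rmin alp (Rmin (d - p) (Rabs e / 2))); [|lra].
    apply Rmin_glb_lt; auto. apply Rmin_glb_lt; lra. }
  destruct Ht as [t [Ht1 [Ht2 [Ht3 Ht4]]]].
  specialize (Hal (d - t)). simpl in Hal. unfold R_dist, D_x, no_cond in Hal.
  assert (Hr : Rabs (h (d - t) - h d) < Rabs e / 2).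
  { apply Hal. split. split; auto; lra. rewrite Rabs_left; lra. }
  rewrite Hh in Hr by lra.
  replace (s * (d - t) + c - h d) with (e - s * t) in Hr by (unfold e; ring).
  clearbody e. unfold Rabs in *.
  destruct (Rcase_abs e), (Rcase_abs (e - s * t)); destruct Hs; subst; lra.
Qed.

Lemma cont_right h q d s c : continuity_pt h d -> d < q -> (s = 1 \/ s = -1) ->
  (forall x, d < x < q -> h x = s * x + c) -> h d = s * d + c.
Proof.
  intros Hc Hpd Hs Hh. destruct (Req_dec (h d) (s * d + c)) as [E|E]; auto. exfalso.
  set (e := s * d + c - h d).
  assert (HD : 0 < Rabs e) by (apply Rabs_pos_lt; unfold e; lra).
  destruct (Hc (Rabs e / 2) ltac:(lra)) as [alp [Ha Hal]].
  assert (Ht : exists t, 0 < t /\ t < alp /\ t < q - d /\ t < Rabs e / 2).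
  { exists (Rmin alp (Rmin (q - d) (Rabs e / 2)) / 2).
    pose proof (Rmin_l alp (Rmin (q - d) (Rabs e / 2))). pose proof (Rmin_r alp (Rmin (q - d) (Rabs e / 2))).
    pose proof (Rmin_l (q - d) (Rabs e / 2)). pose proof (Rmin_r (q - d) (Rabs e / 2)).
    assert (0 < Rmin alp (Rmin (q - d) (Rabs e / 2))); [|lra].
    apply Rmin_glb_lt; auto. apply Rmin_glb_lt; lra. }
  destruct Ht as [t [Ht1 [Ht2 [Ht3 Ht4]]]].
  specialize (Hal (d + t)). simpl in Hal. unfold R_dist, D_x, no_cond in Hal.
  assert (Hr : Rabs (h (d + t) - h d) < Rabs e / 2).
  { apply Hal. split. split; auto; lra. rewrite Rabs_right; lra. }
  rewrite Hh in Hr by lra.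
  replace (s * (d + t) + c - h d) with (e + s * t) in Hr by (unfold e; ring).
  clearbody e. unfold Rabs in *.
  destruct (Rcase_abs e), (Rcase_abs (e + s * t)); destruct Hs; subst; lra.
Qed.

Lemma bij_inj h x y : bij_X h -> X x -> X y -> h x = h y -> x = y.
Proof. intros [_ [H _]]. apply H. Qed.

Lemma aff_merge h p d q : bij_X h -> 0 <= p -> p < d -> d < q -> q <= 1 ->
  aff h p d -> aff h d q -> continuity_pt h d -> aff h p q.
Proof.
  intros Hb Hp Hpd Hdq Hq [s1 [c1 [Hs1 H1]]] [s2 [c2 [Hs2 H2]]] Hc.
  pose proof (cont_left h p d s1 c1 Hc Hpd Hs1 H1) as E1.
  pose proof (cont_right h q d s2 c2 Hc Hdq Hs2 H2) as E2.
  destruct (Req_dec s1 s2) as [Es|Es].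
  - subst s2. assert (c1 = c2) by lra. subst c2.
    exists s1, c1. split; auto. intros x Hx.
    destruct (Rlt_le_dec x d). apply H1; lra. destruct (Req_dec x d). subst; auto. apply H2; lra.
  - exfalso. set (t := Rmin (d - p) (q - d) / 2).
    pose proof (Rmin_l (d - p) (q - d)). pose proof (Rmin_r (d - p) (q - d)).
    assert (0 < Rmin (d - p) (q - d)) by (apply Rmin_glb_lt; lra).
    assert (E : h (d - t) = h (d + t)).
    { rewrite H1, H2 by (unfold t; lra). destruct Hs1, Hs2; subst; lra. }
    apply (bij_inj h) in E; unfold X, t in *; try lra; auto.
Qed.

Definition inb (p q y : R) : bool := andb (ltR p y) (ltR y q).

Lemma inb_spec p q y : inb p q y = true <-> p < y < q.
Proof.
  unfold inb, ltR. destruct (Rlt_dec p y), (Rlt_dec y q); simpl; split; intros; try lra; auto; discriminate.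
Qed.

Lemma filter_lt {A} (l : list A) f g : (forall y, In y l -> f y = true -> g y = true) ->
  (exists y, In y l /\ g y = true /\ f y = false) ->
  (length (filter f l) < length (filter g l))%nat.
Proof.
  induction l as [|a l IH]; intros H1 [y [Hy [Hg Hf]]]; [destruct Hy|].
  simpl. destruct Hy as [->|Hy].
  - rewrite Hg, Hf. simpl.
    assert (length (filter f l) <= length (filter g l))%nat; [|lia].
    clear IH Hg Hf. induction l as [|b l IH2]; simpl; auto.
    destruct (f b) eqn:Fb. rewrite (H1 b) by (simpl; auto). simpl. apply le_n_S, IH2.
    intros z Hz. apply H1. simpl in *; tauto.
    destruct (g b); simpl; [apply le_S|]; apply IH2; intros z Hz; apply H1; simpl in *; tauto.
  - assert (IHl : (length (filter f l) < length (filter g l))%nat).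
    { apply IH. intros z Hz. apply H1; simpl; auto. exists y; auto. }
    destruct (f a) eqn:Fa. rewrite (H1 a) by (simpl; auto). simpl; lia.
    destruct (g a); simpl; lia.
Qed.

Lemma aff_sub h a b a' b' : aff h a b -> a <= a' -> b' <= b -> aff h a' b'.
Proof. intros [s [c [Hs H]]] H1 H2. exists s, c. split; auto. intros x Hx. apply H; lra. Qed.

Lemma affinity h A : bij_X h -> affine_part h A -> forall N p q, 0 <= p -> p < q -> q <= 1 ->
  (length (filter (inb p q) A) <= N)%nat ->
  (forall x, p < x < q -> continuity_pt h x) -> aff h p q.
Proof.
  intros Hb [HA HAa].
  assert (NoPt : forall p q, 0 <= p -> p < q -> q <= 1 -> ~ (exists d, In d A /\ p < d < q) -> aff h p q).
  { intros p q Hp Hpq Hq ND. destruct (locate A HA p ltac:(lra)) as [k [Hk [H1 H2]]].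
    assert (q <= bnd A k).
    { destruct (Rle_dec q (bnd A k)); auto. exfalso. apply ND. exists (bnd A k). split; [apply bnd_in; auto|lra]. }
    eapply aff_sub; [apply HAa; eauto|lra|lra]. }
  assert (Cnt : forall p q d, In d A -> p < d < q ->
     (length (filter (inb p d) A) < length (filter (inb p q) A))%nat /\
     (length (filter (inb d q) A) < length (filter (inb p q) A))%nat).
  { intros p q d Hd Hdpq. split; apply filter_lt.
    - intros y _ Hy. apply inb_spec in Hy. apply inb_spec. lra.
    - exists d. split; auto. split. apply inb_spec; auto.
      destruct (inb p d d) eqn:E; auto. apply inb_spec in E. lra.
    - intros y _ Hy. apply inb_spec in Hy. apply inb_spec. lra.
    - exists d. split; auto. split. apply inb_spec; auto.
      destruct (inb d q d) eqn:E; auto. apply inb_spec in E. lra. }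
  induction N as [|N IH]; intros p q Hp Hpq Hq HN Hc.
  - destruct (excluded_middle_informative (exists d, In d A /\ p < d < q)) as [[d [Hd Hdpq]]|ND].
    + exfalso. destruct (Cnt p q d Hd Hdpq). lia.
    + apply NoPt; auto.
  - destruct (excluded_middle_informative (exists d, In d A /\ p < d < q)) as [[d [Hd Hdpq]]|ND].
    + destruct (Cnt p q d Hd Hdpq) as [C1 C2].
      apply (aff_merge h p d q); [auto|lra|lra|lra|lra| | |apply Hc; lra].
      * apply IH; [lra|lra|lra|lia|intros x Hx; apply Hc; lra].
      * apply IH; [lra|lra|lra|lia|intros x Hx; apply Hc; lra].
    + apply NoPt; auto.
Qed.

Lemma assoc_affine h A cs : bij_X h -> affine_part h A -> associated h cs -> affine_part h cs.
Proof.
  intros Hb HA [Hp Hc]. split; auto. intros j Hj.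
  pose proof (alpha_range cs Hp j Hj). pose proof (bnd_range cs Hp j Hj). pose proof (alpha_bnd cs Hp j Hj).
  apply (affinity h A Hb HA (length (filter (inb (alpha cs j) (bnd cs j)) A))); try lra; auto.
  intros x Hx. apply (Hc j Hj x Hx).
Qed.

Lemma affine_assoc h cs : affine_part h cs -> associated h cs.
Proof.
  intros [Hp Ha]. split; auto. intros j Hj x Hx. apply (aff_cont h (alpha cs j) (bnd cs j)); auto.
Qed.

Lemma min_exists (P : nat -> Prop) : (exists n, P n) -> exists n, P n /\ forall m, P m -> (n <= m)%nat.
Proof.
  intros [n Hn]. revert Hn. induction n as [n IH] using lt_wf_ind. intros Hn.
  destruct (excluded_middle_informative (exists m, (m < n)%nat /\ P m)) as [[m [Hm Pm]]|N].
  - apply (IH m); auto.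
  - exists n. split; auto. intros m Pm. destruct (le_lt_dec n m); auto. exfalso. apply N. eauto.
Qed.

Lemma Pmin_assoc h : (exists cs, associated h cs) -> associated h (Pmin h).
Proof.
  intros Hex. unfold Pmin.
  assert (E : exists cs, associated h cs /\ forall cs', associated h cs' -> (length cs <= length cs')%nat).
  { destruct (min_exists (fun n => exists cs, associated h cs /\ length cs = n)) as [n [[cs [H1 H2]] H3]].
    - destruct Hex as [cs Hcs]. eauto.
    - exists cs. split; auto. intros cs' H'. rewrite H2. apply H3. eauto. }
  exact (proj1 (epsilon_spec (inhabits nil) _ E)).
Qed.

Lemma IET_affine f : IET f -> exists cs, affine_part f cs.
Proof.
  intros [_ [cs [Hp H]]]. exists cs. split; auto. intros j Hj.
  destruct (H j Hj) as [[c Hc]|[c Hc]].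
  - exists 1, c. split; auto. intros x Hx. rewrite Hc by exact Hx. ring.
  - exists (-1), c. split; auto. intros x Hx. rewrite Hc by exact Hx. ring.
Qed.

Lemma eps_affine h : bij_X h -> (exists A, affine_part h A) -> affine_part h (Pmin h).
Proof.
  intros Hb [A HA]. apply (assoc_affine h A); auto. apply Pmin_assoc. exists A. now apply affine_assoc.
Qed.

Lemma finite_choice n (P : nat -> nat -> Prop) : (forall i, (i < n)%nat -> exists k, P i k) ->
  exists f, forall i, (i < n)%nat -> P i (f i).
Proof.
  induction n as [|n IH]; intros H.
  - exists (fun _ => 0%nat). intros; lia.
  - destruct IH as [f Hf]. intros i Hi. apply H. lia.
    destruct (H n ltac:(lia)) as [k Hk].
    exists (fun i => if Nat.eqb i n then k else f i). intros i Hi.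
    destruct (Nat.eqb_spec i n). subst; auto. apply Hf. lia.
Qed.

Section Tiling.
Variable h : R -> R.
Variable cs : list R.
Hypothesis Hb : bij_X h.
Hypothesis Ha : affine_part h cs.
Set Default Proof Using "Hb Ha".

Let Hp : is_partition cs := proj1 Ha.
Let n := nb_int cs.
Definition ee j := beta h cs j + (bnd cs j - alpha cs j).

Lemma open_X j x : (j < n)%nat -> in_open cs j x -> X x.
Proof.
  intros Hj Hx. pose proof (alpha_range cs Hp j Hj). pose proof (bnd_range cs Hp j Hj).
  unfold in_open in Hx. unfold X; lra.
Qed.

Lemma T_form j : (j < n)%nat -> exists s c, (s = 1 \/ s = -1) /\
   (forall x, alpha cs j < x < bnd cs j -> h x = s * x + c) /\
   beta h cs j = mlow s c (alpha cs j) (bnd cs j).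
Proof.
  intros Hj. destruct (proj2 Ha j Hj) as [s [c [Hs Hh]]]. exists s, c. split; auto. split; auto.
  rewrite beta_glbf. apply glbf_aff; auto. apply alpha_bnd; auto.
Qed.

Lemma T_img j : (j < n)%nat -> forall y,
  (exists x, in_open cs j x /\ y = h x) <-> beta h cs j < y < ee j.
Proof.
  intros Hj y. destruct (T_form j Hj) as [s [c [Hs [Hh Hbeta]]]]. unfold ee. rewrite Hbeta.
  apply img_aff; auto. apply alpha_bnd; auto.
Qed.

Lemma T_lt j : (j < n)%nat -> beta h cs j < ee j.
Proof. intros Hj. unfold ee. pose proof (alpha_bnd cs Hp j Hj). lra. Qed.

Lemma T_range j : (j < n)%nat -> 0 <= beta h cs j /\ ee j <= 1.
Proof.
  intros Hj. pose proof (T_lt j Hj).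
  assert (Hin : forall y, beta h cs j < y < ee j -> 0 <= y < 1).
  { intros y Hy. apply (T_img j Hj) in Hy. destruct Hy as [x [Hx ->]].
    apply Hb. pose proof (alpha_range cs Hp j Hj). pose proof (bnd_range cs Hp j Hj).
    unfold in_open in Hx. unfold X. lra. }
  split.
  - destruct (Rle_dec 0 (beta h cs j)) as [|N]; auto. exfalso.
    set (y := (beta h cs j + Rmin 0 (ee j)) / 2).
    pose proof (Rmin_l 0 (ee j)). pose proof (Rmin_r 0 (ee j)).
    assert (beta h cs j < Rmin 0 (ee j)) by (apply Rmin_glb_lt; lra).
    specialize (Hin y ltac:(unfold y; lra)). unfold y in Hin. lra.
  - destruct (Rle_dec (ee j) 1) as [|N]; auto. exfalso.
    set (y := (Rmax 1 (beta h cs j) + ee j) / 2).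
    pose proof (Rmax_l 1 (beta h cs j)). pose proof (Rmax_r 1 (beta h cs j)).
    assert (Rmax 1 (beta h cs j) < ee j) by (apply Rmax_lub_lt; lra).
    specialize (Hin y ltac:(unfold y; lra)). unfold y in Hin. lra.
Qed.

Lemma T_disj j k y : (j < n)%nat -> (k < n)%nat ->
  beta h cs j < y < ee j -> beta h cs k < y < ee k -> j = k.
Proof.
  intros Hj Hk H1 H2. apply (T_img j Hj) in H1. apply (T_img k Hk) in H2.
  destruct H1 as [x1 [Hx1 ->]]. destruct H2 as [x2 [Hx2 E]].
  apply (bij_inj h _ _ Hb) in E; auto.
  - subst. apply (open_disj cs Hp j k x2); auto.
  - apply (open_X j); auto.
  - apply (open_X k); auto.
Qed.

Lemma T_overlap j k : (j < n)%nat -> (k < n)%nat ->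
  beta h cs k <= beta h cs j < ee k -> j = k.
Proof.
  intros Hj Hk H. pose proof (T_lt j Hj).
  set (y := beta h cs j + Rmin (ee k - beta h cs j) (ee j - beta h cs j) / 2).
  pose proof (Rmin_l (ee k - beta h cs j) (ee j - beta h cs j)).
  pose proof (Rmin_r (ee k - beta h cs j) (ee j - beta h cs j)).
  assert (0 < Rmin (ee k - beta h cs j) (ee j - beta h cs j)) by (apply Rmin_glb_lt; lra).
  apply (T_disj j k y); auto; unfold y; lra.
Qed.

Lemma T_vnotin j k : (j < n)%nat -> (k < n)%nat -> ~ (beta h cs k < beta h cs j < ee k).
Proof.
  intros Hj Hk H. destruct (Nat.eq_dec j k). subst; lra.
  apply n0. apply T_overlap; auto; lra.
Qed.

Lemma T_vinj : injn n (beta h cs).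
Proof.
  intros j k Hj Hk E. apply T_overlap; auto. pose proof (T_lt k Hk). lra.
Qed.

Lemma T_uinj : injn n (fun j => h (alpha cs j)).
Proof.
  intros j k Hj Hk E. apply (bij_inj h _ _ Hb) in E.
  - apply (alpha_inj cs Hp); auto.
  - pose proof (alpha_range cs Hp j Hj). pose proof (alpha_range cs Hp k Hk). unfold X; lra.
  - pose proof (alpha_range cs Hp j Hj). pose proof (alpha_range cs Hp k Hk). unfold X; lra.
Qed.

Lemma T_preimg y : 0 <= y < 1 -> (forall k, (k < n)%nat -> ~ (beta h cs k < y < ee k)) ->
  exists k, (k < n)%nat /\ y = h (alpha cs k).
Proof.
  intros Hy Hn. destruct Hb as [_ [_ Hs]]. destruct (Hs y Hy) as [x [Hx <-]].
  destruct (locate cs Hp x Hx) as [k [Hk [H1 H2]]].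
  exists k. split; auto. destruct H1 as [H1|H1]; [|rewrite H1; reflexivity]. exfalso.
  apply (Hn k Hk). apply (T_img k Hk). exists x. split; auto. split; auto.
Qed.

Lemma T5 j : (j < n)%nat -> exists k, (k < n)%nat /\ beta h cs j = h (alpha cs k).
Proof.
  intros Hj. apply T_preimg.
  - pose proof (T_range j Hj). pose proof (T_lt j Hj). lra.
  - intros k Hk. apply T_vnotin; auto.
Qed.

Lemma T_rho : exists rho, isperm n rho /\ forall j, (j < n)%nat -> beta h cs j = h (alpha cs (rho j)).
Proof.
  destruct (finite_choice n (fun j k => (k < n)%nat /\ beta h cs j = h (alpha cs k))) as [rho Hr].
  { intros i Hi. apply T5; auto. }
  exists rho. split; [split|].
  - intros i Hi. apply Hr; auto.
  - intros i j Hi Hj E. apply T_vinj; auto. rewrite (proj2 (Hr i Hi)), (proj2 (Hr j Hj)), E. reflexivity.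
  - intros j Hj. apply Hr; auto.
Qed.

Lemma T6 j : (j < n)%nat -> ee j < 1 -> exists m, (m < n)%nat /\ ee j = beta h cs m.
Proof.
  intros Hj He. destruct (T_preimg (ee j)) as [k [Hk E]].
  - pose proof (T_range j Hj). pose proof (T_lt j Hj). lra.
  - intros k Hk Hin. assert (j = k).
    { pose proof (T_lt j Hj).
      set (y := ee j - Rmin (ee j - beta h cs j) (ee j - beta h cs k) / 2).
      pose proof (Rmin_l (ee j - beta h cs j) (ee j - beta h cs k)).
      pose proof (Rmin_r (ee j - beta h cs j) (ee j - beta h cs k)).
      assert (0 < Rmin (ee j - beta h cs j) (ee j - beta h cs k)) by (apply Rmin_glb_lt; lra).
      apply (T_disj j k y); auto; unfold y; lra. }
    subst. lra.
  - destruct T_rho as [rho [Hr Hrv]]. destruct (isperm_surj n rho Hr k Hk) as [m [Hm <-]].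
    exists m. split; auto. rewrite E, Hrv; auto.
Qed.

Lemma T_y_u x j i : (j < n)%nat -> (i < n)%nat -> in_open cs j x -> h x <> h (alpha cs i).
Proof.
  intros Hj Hi Hx E. apply (bij_inj h _ _ Hb) in E.
  - subst. apply (elem_not_open cs Hp (alpha cs i) j); auto. apply alpha_in; auto.
  - apply (open_X j); auto.
  - pose proof (alpha_range cs Hp i Hi). unfold X; lra.
Qed.

Lemma T_y_v x j i : (j < n)%nat -> (i < n)%nat -> in_open cs j x -> h x <> beta h cs i.
Proof.
  intros Hj Hi Hx E. assert (Hin : beta h cs j < h x < ee j) by (apply T_img; eauto).
  rewrite E in Hin. apply (T_vnotin i j); auto.
Qed.

End Tiling.
Unset Default Proof Using.

Lemma sgn_X2 h cs : sgn_sigma h cs = X2 (nb_int cs) (condb (fun i => h (alpha cs i)) (beta h cs)).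
Proof. unfold sgn_sigma, sigma_inversions, indices. rewrite odd_filter_prod. reflexivity. Qed.

Lemma Rnum_XS h cs : Nat.odd (Rnum h cs) = XS (seq 0 (nb_int cs)) (fun j => dbab h (alpha cs j) (bnd cs j)).
Proof. rewrite Rnum_dbab. unfold indices. apply odd_filter_XS. Qed.

Lemma eps_P_eq h cs : eps_P h cs = xorb (XS (seq 0 (nb_int cs)) (fun j => dbab h (alpha cs j) (bnd cs j)))
   (X2 (nb_int cs) (condb (fun i => h (alpha cs i)) (beta h cs))).
Proof. unfold eps_P. now rewrite Rnum_XS, sgn_X2. Qed.

Lemma refine_affine h P P' : affine_part h P -> is_partition P' -> (forall y, In y P -> In y P') ->
  affine_part h P'.
Proof.
  intros [HP Ha] HP' Hinc. split; auto. intros k Hk.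
  destruct (refine_piece P P' HP HP' Hinc k Hk) as [j [Hj [H1 H2]]].
  eapply aff_sub; eauto.
Qed.

Definition ins2 {A} (j : nat) (f : nat -> A) (y0 y1 : A) (k : nat) : A :=
  if Nat.ltb k j then f k else if Nat.eqb k j then y0 else if Nat.eqb k (S j) then y1 else f (k - 1)%nat.

Lemma ins2_insf {A} j (f : nat -> A) y k : ins2 j f (f j) y k = insf (S j) f y k.
Proof.
  unfold ins2, insf. destruct (Nat.ltb_spec k j), (Nat.ltb_spec k (S j)); try lia; auto.
  - destruct (Nat.eqb_spec k j); subst; auto; lia.
  - destruct (Nat.eqb_spec k j); try lia. destruct (Nat.eqb_spec k (S j)); auto.
Qed.

Lemma insl_piece {A} cs j x (G : R -> R -> A) k : (S j < length cs)%nat ->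
  G (alpha (insl cs j x) k) (bnd (insl cs j x) k) =
  ins2 j (fun k => G (alpha cs k) (bnd cs k)) (G (alpha cs j) x) (G x (bnd cs j)) k.
Proof.
  intros H. unfold alpha, bnd. rewrite !insl_nth by lia. unfold ins2, insf.
  repeat match goal with |- context [Nat.ltb ?a ?b] => destruct (Nat.ltb_spec a b)
   | |- context [Nat.eqb ?a ?b] => destruct (Nat.eqb_spec a b) end; try lia; try reflexivity;
  subst; repeat f_equal; lia.
Qed.

Lemma injn_ext n u u' : injn n u -> (forall i, (i < n)%nat -> u' i = u i) -> injn n u'.
Proof. intros H E i j Hi Hj Eq. apply H; auto. rewrite <- !E; auto. Qed.

Lemma tau_invol j k : tau j (tau j k) = k.
Proof.
  unfold tau. destruct (Nat.eqb_spec k j), (Nat.eqb_spec k (S j)); subst;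
  repeat (first [rewrite Nat.eqb_refl | match goal with |- context [Nat.eqb ?a ?b] => destruct (Nat.eqb_spec a b) end]); lia.
Qed.

Lemma step h cs j x : bij_X h -> affine_part h cs -> (j < nb_int cs)%nat ->
  alpha cs j < x < bnd cs j ->
  affine_part h (insl cs j x) /\ eps_P h (insl cs j x) = eps_P h cs.
Proof.
  intros Hb Ha Hj Hx. pose proof (proj1 Ha) as Hp.
  pose proof (part_len cs Hp) as Hl.
  set (cs' := insl cs j x).
  assert (Hp' : is_partition cs') by (apply insl_part; auto).
  assert (Ha' : affine_part h cs').
  { apply (refine_affine h cs); auto. intros y Hy. apply insl_in; auto. }
  split; auto.
  set (n := nb_int cs).
  assert (Hn' : nb_int cs' = S n).
  { unfold nb_int at 1. unfold cs'. rewrite insl_len by lia. fold n. lia. }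
  rewrite !eps_P_eq. rewrite Hn'. fold n.
  destruct (proj2 Ha j Hj) as [s [c [Hs Hh]]].
  pose proof (alpha_bnd cs Hp j Hj) as Hab.
  assert (Ed : forall k, dbab h (alpha cs' k) (bnd cs' k) =
     ins2 j (fun k => dbab h (alpha cs k) (bnd cs k)) (dbab h (alpha cs j) (bnd cs j)) (dbab h (alpha cs j) (bnd cs j)) k).
  { intros k. unfold cs'. rewrite (insl_piece cs j x (dbab h) k) by lia.
    rewrite !(dbab_aff h _ _ s c) by (auto; try lra; intros; apply Hh; lra). reflexivity. }
  assert (Eu : forall k, h (alpha cs' k) = insf (S j) (fun i => h (alpha cs i)) (h x) k).
  { intros k. unfold cs'. rewrite <- ins2_insf.
    apply (insl_piece cs j x (fun a _ => h a) k). lia. }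
  assert (Ev : forall k, beta h cs' k =
     ins2 j (beta h cs) (glbf h (alpha cs j) x) (glbf h x (bnd cs j)) k).
  { intros k. rewrite beta_glbf. unfold cs'. apply (insl_piece cs j x (glbf h) k). lia. }
  assert (G1 : glbf h (alpha cs j) x = mlow s c (alpha cs j) x)
    by (apply glbf_aff; auto; try lra; intros; apply Hh; lra).
  assert (G2 : glbf h x (bnd cs j) = mlow s c x (bnd cs j))
    by (apply glbf_aff; auto; try lra; intros; apply Hh; lra).
  assert (G0 : beta h cs j = mlow s c (alpha cs j) (bnd cs j))
    by (rewrite beta_glbf; apply glbf_aff; auto).
  assert (Hxv : h x = s * x + c) by (apply Hh; lra).
  assert (R1 : XS (seq 0 (S n)) (fun k => dbab h (alpha cs' k) (bnd cs' k)) =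
     xorb (XS (seq 0 n) (fun k => dbab h (alpha cs k) (bnd cs k))) (ltR s 0)).
  { rewrite (XS_ext_in _ _ (insf (S j) (fun k => dbab h (alpha cs k) (bnd cs k)) (dbab h (alpha cs j) (bnd cs j)))).
    - rewrite XS_insf by lia. f_equal. apply (dbab_aff h _ _ s c); auto.
    - intros k _. rewrite Ed, <- (ins2_insf j (fun k => dbab h (alpha cs k) (bnd cs k))). reflexivity. }
  rewrite R1.
  destruct (T_rho h cs Hb Ha) as [rho [Hrho Hrv]].
  assert (Yu : forall i, (i < n)%nat -> h x <> h (alpha cs i)).
  { intros i Hi. apply (T_y_u h cs Hb Ha x j i); auto. }
  assert (Yv : forall i, (i < n)%nat -> h x <> beta h cs i).
  { intros i Hi. apply (T_y_v h cs Hb Ha x j i); auto. }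
  assert (Main : X2 (S n) (condb (insf (S j) (fun i => h (alpha cs i)) (h x)) (insf (S j) (beta h cs) (h x)))
      = X2 n (condb (fun i => h (alpha cs i)) (beta h cs))).
  { apply (X2_insf_condb n (S j) _ _ _ rho); auto. }
  destruct Hs as [Hs|Hs]; subst s.
  -
    replace (ltR 1 0) with false by (unfold ltR; destruct (Rlt_dec 1 0); auto; lra).
    rewrite xorb_false_r. f_equal. rewrite <- Main. apply X2_ext. intros i k _ _.
    unfold condb. rewrite !Eu, !Ev, <- !ins2_insf, G1, G2, G0. unfold mlow.
    replace ((1 * (alpha cs j + x) - (x - alpha cs j)) / 2 + c) with ((1 * (alpha cs j + bnd cs j) - (bnd cs j - alpha cs j)) / 2 + c) by lra.
    replace ((1 * (x + bnd cs j) - (bnd cs j - x)) / 2 + c) with (h x) by lra.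
    reflexivity.
  -
    replace (ltR (-1) 0) with true by (unfold ltR; destruct (Rlt_dec (-1) 0); auto; lra).
    set (u' := fun k => h (alpha cs' k)).
    set (w' := insf (S j) (beta h cs) (h x)).
    assert (Vw : forall k, beta h cs' k = w' (tau j k)).
    { intros k. rewrite Ev, G1, G2. unfold w'. rewrite <- ins2_insf. unfold ins2, tau.
      destruct (Nat.eqb_spec k j); [|destruct (Nat.eqb_spec k (S j))];
      repeat match goal with |- context [Nat.ltb ?a ?b] => destruct (Nat.ltb_spec a b)
       | |- context [Nat.eqb ?a ?b] => destruct (Nat.eqb_spec a b) end; try lia; try reflexivity;
      subst; rewrite ?G0, ?Hxv; unfold mlow; try lra; try (f_equal; lia). }
    assert (Iu : injn (S n) u').
    { rewrite <- Hn'. apply T_uinj; auto. }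
    assert (Iv : injn (S n) (beta h cs')).
    { rewrite <- Hn'. apply T_vinj; auto. }
    assert (Iw : injn (S n) w').
    { apply (injn_ext (S n) (fun k => beta h cs' (tau j k))).
      - apply injn_comp; auto. apply tau_perm. lia.
      - intros i _. rewrite Vw, tau_invol. reflexivity. }
    assert (Ew : X2 (S n) (condb u' w') = X2 n (condb (fun i => h (alpha cs i)) (beta h cs))).
    { rewrite <- Main. apply X2_ext. intros i k _ _. unfold condb, u', w'. rewrite !Eu. reflexivity. }
    assert (Et : X2 (S n) (condb w' (fun k => w' (tau j k))) = true).
    { rewrite conj_lemma; auto. apply X2_tau. lia. apply tau_perm. lia. }
    assert (Ev' : X2 (S n) (condb u' (beta h cs')) = X2 (S n) (condb u' (fun k => w' (tau j k)))).
    { apply X2_ext. intros i k _ _. unfold condb. rewrite !Vw. reflexivity. }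
    change (X2 (S n) (condb (fun i => h (alpha cs' i)) (beta h cs'))) with (X2 (S n) (condb u' (beta h cs'))).
    rewrite Ev'. rewrite cocycle in Ew, Et |- *; auto.
    2:{ apply injn_comp; auto. apply tau_perm. lia. }
    2:{ apply injn_comp; auto. apply tau_perm. lia. }
    rewrite cocycle; [|apply T_uinj; auto|apply T_vinj; auto].
    rewrite cocycle in Ew; [|apply T_uinj; auto|apply T_vinj; auto].
    rewrite <- Ew.
    destruct (T (S n) u'), (T (S n) w'), (T (S n) (fun k => w' (tau j k))),
      (XS (seq 0 n) (fun k => dbab h (alpha cs k) (bnd cs k))); simpl in *; auto; discriminate.
Qed.

Lemma refine_list L : forall cs, is_partition cs -> (forall y, In y L -> 0 <= y <= 1) ->
  exists cs', is_partition cs' /\ (forall y, In y cs' <-> In y cs \/ In y L) /\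
   forall h, bij_X h -> affine_part h cs -> affine_part h cs' /\ eps_P h cs' = eps_P h cs.
Proof.
  induction L as [|y L IH]; intros cs Hp HL.
  - exists cs. split; auto. split; [intros; simpl; tauto|]. auto.
  - assert (E1 : exists cs1, is_partition cs1 /\ (forall z, In z cs1 <-> In z cs \/ z = y) /\
       forall h, bij_X h -> affine_part h cs -> affine_part h cs1 /\ eps_P h cs1 = eps_P h cs).
    { destruct (excluded_middle_informative (In y cs)) as [Hy|Hy].
      - exists cs. split; auto. split; [|auto]. intros z; split; auto. intros [H|H]; subst; auto.
      - assert (Hy1 : 0 <= y < 1).
        { specialize (HL y (or_introl eq_refl)). destruct (Req_dec y 1); [|lra].
          subst. exfalso. apply Hy. rewrite <- (part_last cs Hp). apply nth_In.
          rewrite (part_len cs Hp). lia. }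
        destruct (locate cs Hp y Hy1) as [j [Hj [H1 H2]]].
        assert (H1' : alpha cs j < y).
        { destruct H1; auto. subst. exfalso. apply Hy. apply alpha_in; auto. }
        exists (insl cs j y). split; [apply insl_part; auto|]. split.
        + intros z. rewrite insl_in. tauto.
        + intros h Hb Ha. apply step; auto. }
    destruct E1 as [cs1 [Hp1 [Hin1 Hh1]]].
    destruct (IH cs1 Hp1) as [cs' [Hp' [Hin' Hh']]].
    { intros z Hz. apply HL. simpl; auto. }
    exists cs'. split; auto. split.
    + intros z. rewrite Hin', Hin1. simpl. split.
      * intros [[A|A]|A]; auto.
      * intros [A|[A|A]]; auto.
    + intros h Hb Ha. destruct (Hh1 h Hb Ha) as [Ha1 E1]. destruct (Hh' h Hb Ha1) as [Ha' E'].
      split; auto. congruence.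
Qed.

Lemma eps_indep h P1 P2 : bij_X h -> affine_part h P1 -> affine_part h P2 -> eps_P h P1 = eps_P h P2.
Proof.
  intros Hb H1 H2.
  destruct (refine_list P2 P1 (proj1 H1)) as [c1 [Hc1 [I1 E1]]].
  { intros y Hy. apply (elem_range P2 (proj1 H2)); auto. }
  destruct (refine_list P1 P2 (proj1 H2)) as [c2 [Hc2 [I2 E2]]].
  { intros y Hy. apply (elem_range P1 (proj1 H1)); auto. }
  assert (c1 = c2).
  { apply sorted_unique. apply Hc1. apply Hc2. intros y. rewrite I1, I2. tauto. }
  subst c2. destruct (E1 h Hb H1) as [_ <-]. destruct (E2 h Hb H2) as [_ <-]. reflexivity.
Qed.

Lemma eps_any h P : bij_X h -> affine_part h P -> eps h = eps_P h P.
Proof.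
  intros Hb HP. unfold eps. apply eps_indep; auto. apply eps_affine; eauto.
Qed.

Lemma bij_comp f g : bij_X f -> bij_X g -> bij_X (fun x => f (g x)).
Proof.
  intros [F1 [F2 F3]] [G1 [G2 G3]]. split; [|split].
  - intros x Hx. apply F1. apply G1. exact Hx.
  - intros x y Hx Hy E. apply (G2 x y Hx Hy). apply (F2 (g x) (g y) (G1 x Hx) (G1 y Hy) E).
  - intros y Hy. destruct (F3 y Hy) as [z [Hz <-]]. destruct (G3 z Hz) as [x [Hx <-]]. eauto.
Qed.

Definition gi (g : R -> R) (d : R) : R :=
  if excluded_middle_informative (X d) then epsilon (inhabits 0) (fun x => X x /\ g x = d) else 0.

Lemma gi_spec g d : bij_X g -> X d -> X (gi g d) /\ g (gi g d) = d.
Proof.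
  intros [_ [_ Hs]] Hd. unfold gi. destruct (excluded_middle_informative (X d)); [|tauto].
  apply (epsilon_spec (inhabits 0) (fun x => X x /\ g x = d)). apply Hs; auto.
Qed.

Lemma gi_range g d : bij_X g -> 0 <= gi g d <= 1.
Proof.
  intros Hb. destruct (excluded_middle_informative (X d)) as [Hd|Hd].
  - destruct (gi_spec g d Hb Hd) as [H _]. unfold X in H; lra.
  - unfold gi. destruct (excluded_middle_informative (X d)); [tauto|lra].
Qed.

Lemma part01 : is_partition [0; 1].
Proof.
  apply partition_char.
  - repeat constructor. lra.
  - simpl; auto.
  - simpl; auto.
  - intros y [<-|[<-|[]]]; lra.
Qed.

Lemma sorted_NoDup l : Sorted Rlt l -> NoDup l.
Proof.
  intros H. apply SS_of in H. induction H; constructor; auto.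
  intros Hin. rewrite Forall_forall in H0. specialize (H0 a Hin). lra.
Qed.

Lemma ltR_mul sf sg : (sf = 1 \/ sf = -1) -> (sg = 1 \/ sg = -1) ->
  ltR (sf * sg) 0 = xorb (ltR sg 0) (ltR sf 0).
Proof.
  intros [->| ->] [->| ->]; unfold ltR;
  repeat (destruct (Rlt_dec _ _)); simpl; auto; lra.
Qed.

Section Comp.
Variables f g : R -> R.
Hypothesis Hf : bij_X f.
Hypothesis Hg : bij_X g.
Variables F G : list R.
Hypothesis HF : affine_part f F.
Hypothesis HG : affine_part g G.

Let fg := fun x => f (g x).

Lemma comp_main : xorb (eps f) (eps g) = eps fg.
Proof.
  pose proof (bij_comp f g Hf Hg) as Hfg. fold fg in Hfg.
  destruct (refine_list (map (gi g) F) G (proj1 HG)) as [P [HP [InP EP]]].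
  { intros y Hy. apply in_map_iff in Hy. destruct Hy as [d [<- _]]. apply gi_range; auto. }
  destruct (EP g Hg HG) as [HPg _].
  set (n := nb_int P).
  assert (CP : forall j, (j < n)%nat -> exists sg cg sf cf, (sg = 1 \/ sg = -1) /\ (sf = 1 \/ sf = -1) /\
     (forall x, alpha P j < x < bnd P j -> g x = sg * x + cg) /\
     beta g P j = mlow sg cg (alpha P j) (bnd P j) /\
     (forall y, beta g P j < y < ee g P j -> f y = sf * y + cf)).
  { intros j Hj. destruct (T_form g P Hg HPg j Hj) as [sg [cg [Hsg [Hgx Hbg]]]].
    assert (NoF : ~ (exists d, In d F /\ beta g P j < d < ee g P j)).
    { intros [d [Hd Hdin]]. apply (T_img g P Hg HPg j Hj) in Hdin. destruct Hdin as [x [Hx ->]].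
      assert (Xx : X x) by (apply (open_X g P Hg HPg j); auto).
      assert (Xg : X (g x)) by (apply Hg; auto).
      destruct (gi_spec g (g x) Hg Xg) as [Xgi Egi].
      apply (bij_inj g _ _ Hg) in Egi; auto.
      apply (elem_not_open P HP x j); [|exact Hj|exact Hx].
      apply InP. right. apply in_map_iff. exists (g x). split; auto. }
    pose proof (T_range g P Hg HPg j Hj) as [R1 R2]. pose proof (T_lt g P Hg HPg j Hj).
    destruct (locate F (proj1 HF) (beta g P j) ltac:(lra)) as [k [Hk [K1 K2]]].
    assert (ee g P j <= bnd F k).
    { destruct (Rle_dec (ee g P j) (bnd F k)); auto. exfalso. apply NoF. exists (bnd F k).
      split; [apply bnd_in; auto; apply HF|lra]. }
    destruct (proj2 HF k Hk) as [sf [cf [Hsf Hfx]]].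
    exists sg, cg, sf, cf. split; auto. split; auto. split; auto. split; auto.
    intros y Hy. apply Hfx. lra. }
  assert (HPfg : affine_part fg P).
  { split; auto. intros j Hj. destruct (CP j Hj) as [sg [cg [sf [cf [Hsg [Hsf [Hgx [Hbg Hfy]]]]]]]].
    exists (sf * sg), (sf * cg + cf). split.
    - destruct Hsg, Hsf; subst; [left|right|right|left]; ring.
    - intros x Hx. unfold fg. rewrite Hfy.
      + rewrite Hgx by auto. ring.
      + apply (T_img g P Hg HPg j Hj). exists x; split; auto. }
  destruct (refine_list (map (beta g P) (seq 0 n)) [0; 1] part01) as [Q [HQ [InQ _]]].
  { intros y Hy. apply in_map_iff in Hy. destruct Hy as [j [<- Hj]]. apply in_seq in Hj.
    pose proof (T_range g P Hg HPg j ltac:(lia)). pose proof (T_lt g P Hg HPg j ltac:(lia)). lra. }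
  destruct (T_rho g P Hg HPg) as [rho [Hrho Hrv]].
  assert (Zero : exists m, (m < n)%nat /\ beta g P m = 0).
  { destruct (T_preimg g P Hg HPg 0) as [k [Hk Ek]]. lra.
    - intros k Hk Hin. pose proof (T_range g P Hg HPg k Hk). lra.
    - destruct (isperm_surj n rho Hrho k Hk) as [m [Hm <-]]. exists m. split; auto. rewrite Hrv; auto. }
  assert (InQ' : forall y, In y Q <-> y = 1 \/ exists j, (j < n)%nat /\ y = beta g P j).
  { intros y. rewrite InQ. simpl. rewrite in_map_iff. split.
    - intros [[A|[A|[]]]|[j [A B]]].
      + subst. right. destruct Zero as [m [Hm Em]]. exists m. auto.
      + auto.
      + right. exists j. apply in_seq in B. split; [lia|auto].
    - intros [A|[j [Hj A]]]; auto. right. exists j. split; auto. apply in_seq; lia. }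
  assert (HlenQ : length Q = S n).
  { assert (Perm : Permutation Q (1 :: map (beta g P) (seq 0 n))).
    { apply NoDup_Permutation.
      - apply sorted_NoDup, HQ.
      - constructor.
        + intros Hin. apply in_map_iff in Hin. destruct Hin as [j [E Hj]]. apply in_seq in Hj.
          pose proof (T_range g P Hg HPg j ltac:(lia)). pose proof (T_lt g P Hg HPg j ltac:(lia)). lra.
        + apply NoDup_map_NoDup_ForallPairs; [|apply seq_NoDup].
          intros i j Hi Hj E. apply in_seq in Hi, Hj. apply (T_vinj g P Hg HPg); auto; lia.
      - intros y. rewrite InQ'. simpl. rewrite in_map_iff. split.
        + intros [A|[j [Hj A]]]; auto. right. exists j. split; auto. apply in_seq; lia.
        + intros [A|[j [A Hj]]]; auto. right. apply in_seq in Hj. exists j. split; auto; lia. }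
    apply Permutation_length in Perm. simpl in Perm. rewrite length_map, length_seq in Perm. auto. }
  assert (HnQ : nb_int Q = n) by (unfold nb_int; lia).
  assert (PiQ : forall j, (j < n)%nat -> exists k, (k < n)%nat /\ alpha Q k = beta g P j /\ bnd Q k = ee g P j).
  { intros j Hj. pose proof (T_range g P Hg HPg j Hj). pose proof (T_lt g P Hg HPg j Hj).
    assert (Hin : In (beta g P j) Q) by (apply InQ'; right; eauto).
    apply (In_nth _ _ 0) in Hin. destruct Hin as [k [Hk Ek]].
    assert (k <> n).
    { intros ->. pose proof (part_last Q HQ). rewrite HnQ in H1. lra. }
    exists k. split; [lia|]. split; [exact Ek|].
    rewrite <- HnQ in Hj.
    assert (Ein : In (ee g P j) Q).
    { apply InQ'. destruct (Req_dec (ee g P j) 1); auto. right.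
      destruct (T6 g P Hg HPg j ltac:(lia) ltac:(lra)) as [m [Hm Em]]. eauto. }
    apply Rle_antisym.
    - apply (elem_ge_bnd Q HQ); auto; [lia|]. unfold alpha. rewrite Ek. lra.
    - assert (Hb' : In (bnd Q k) Q) by (apply bnd_in; auto; lia).
      assert (Hlt : beta g P j < bnd Q k).
      { rewrite <- Ek. apply alpha_bnd; auto; lia. }
      apply InQ' in Hb'. destruct Hb' as [A|[m [Hm A]]].
      + rewrite A. lra.
      + rewrite A in *. destruct (Rle_dec (ee g P j) (beta g P m)); auto. exfalso.
        apply (T_vnotin g P Hg HPg m j); [lia|lia|lra]. }
  destruct (finite_choice n (fun j k => (k < n)%nat /\ alpha Q k = beta g P j /\ bnd Q k = ee g P j) PiQ)
    as [pi Hpi].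
  assert (Hpip : isperm n pi).
  { split. intros i Hi; apply Hpi; auto.
    intros i j Hi Hj E. apply (T_vinj g P Hg HPg); auto.
    destruct (Hpi i Hi) as [_ [A _]]. destruct (Hpi j Hj) as [_ [B _]]. rewrite <- A, <- B, E. reflexivity. }
  assert (HQf : affine_part f Q).
  { split; auto. intros k Hk. rewrite HnQ in Hk. destruct (isperm_surj n pi Hpip k Hk) as [j [Hj <-]].
    destruct (Hpi j Hj) as [_ [A B]]. rewrite A, B.
    destruct (CP j Hj) as [sg [cg [sf [cf [Hsg [Hsf [Hgx [Hbg Hfy]]]]]]]].
    exists sf, cf. split; auto. }
  rewrite (eps_any f Q Hf HQf), (eps_any g P Hg HPg), (eps_any fg P Hfg HPfg).
  rewrite !eps_P_eq. rewrite HnQ. fold n.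
  assert (ED : forall j, (j < n)%nat -> dbab fg (alpha P j) (bnd P j) =
     xorb (dbab g (alpha P j) (bnd P j)) (dbab f (alpha Q (pi j)) (bnd Q (pi j)))).
  { intros j Hj. destruct (Hpi j Hj) as [_ [A B]]. rewrite A, B.
    destruct (CP j Hj) as [sg [cg [sf [cf [Hsg [Hsf [Hgx [Hbg Hfy]]]]]]]].
    pose proof (alpha_bnd P HP j Hj). pose proof (T_lt g P Hg HPg j Hj).
    rewrite (dbab_aff g _ _ sg cg), (dbab_aff f _ _ sf cf); auto.
    rewrite (dbab_aff fg _ _ (sf * sg) (sf * cg + cf)); auto.
    - apply ltR_mul; auto.
    - destruct Hsg, Hsf; subst; [left|right|right|left]; ring.
    - intros x Hx. unfold fg. rewrite Hfy. rewrite Hgx by auto. ring.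
      apply (T_img g P Hg HPg j Hj). exists x; split; auto. }
  rewrite (XS_ext_in _ (fun j => dbab fg (alpha P j) (bnd P j))
     (fun j => xorb (dbab g (alpha P j) (bnd P j)) (dbab f (alpha Q (pi j)) (bnd Q (pi j))))).
  2:{ intros j Hj. apply in_seq in Hj. apply ED. lia. }
  rewrite XS_xor.
  rewrite (XS_reindex n pi (fun k => dbab f (alpha Q k) (bnd Q k)) Hpip).
  set (ufg := fun i => fg (alpha P i)).
  set (vfg := beta fg P).
  set (w := fun i => f (beta g P i)).
  assert (Iufg : injn n ufg) by (apply (T_uinj fg P Hfg HPfg)).
  assert (Ivfg : injn n vfg) by (apply (T_vinj fg P Hfg HPfg)).
  assert (IuQ : injn n (fun i => f (alpha Q i))) by (rewrite <- HnQ; apply (T_uinj f Q Hf HQf)).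
  assert (IvQ : injn n (beta f Q)) by (rewrite <- HnQ; apply (T_vinj f Q Hf HQf)).
  assert (Ew : forall i, (i < n)%nat -> w i = f (alpha Q (pi i))).
  { intros i Hi. destruct (Hpi i Hi) as [_ [A _]]. unfold w. rewrite A. reflexivity. }
  assert (Iw : injn n w).
  { apply (injn_ext n (fun i => f (alpha Q (pi i)))); auto. apply (injn_comp n (fun i => f (alpha Q i)) pi); auto. }
  assert (Evfg : forall i, (i < n)%nat -> vfg i = beta f Q (pi i)).
  { intros i Hi. destruct (Hpi i Hi) as [_ [A B]]. unfold vfg. rewrite !beta_glbf, A, B.
    destruct (CP i Hi) as [sg [cg [sf [cf [Hsg [Hsf [Hgx [Hbg Hfy]]]]]]]].
    pose proof (alpha_bnd P HP i Hi). pose proof (T_lt g P Hg HPg i Hi).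
    rewrite (glbf_aff f _ _ sf cf); auto.
    rewrite (glbf_aff fg _ _ (sf * sg) (sf * cg + cf)); auto.
    - unfold ee. rewrite Hbg. unfold mlow. destruct Hsg, Hsf; subst; lra.
    - destruct Hsg, Hsf; subst; [left|right|right|left]; ring.
    - intros x Hx. unfold fg. rewrite Hfy. rewrite Hgx by auto. ring.
      apply (T_img g P Hg HPg i Hi). exists x; split; auto. }
  assert (S1 : X2 n (condb w vfg) = X2 n (condb (fun i => f (alpha Q i)) (beta f Q))).
  { rewrite <- (X2_condb_reindex n pi (fun i => f (alpha Q i)) (beta f Q) Hpip). apply X2_ext. intros i j Hi Hj.
    unfold condb. rewrite (Ew i Hi), (Ew j Hj), (Evfg i Hi), (Evfg j Hj). reflexivity. }
  assert (S2 : X2 n (condb ufg w) = X2 n (condb (fun i => g (alpha P i)) (beta g P))).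
  { assert (Iga : injn n (fun i => g (alpha P i))) by apply (T_uinj g P Hg HPg).
    transitivity (X2 n (condb ufg (fun i => ufg (rho i)))).
    { apply X2_ext. intros i j Hi Hj. unfold condb, w, ufg, fg. rewrite !Hrv by auto. reflexivity. }
    rewrite conj_lemma; auto.
    transitivity (X2 n (condb (fun i => g (alpha P i)) (fun i => g (alpha P (rho i))))).
    - symmetry. apply (conj_lemma n (fun i => g (alpha P i)) rho); auto.
    - apply X2_ext. intros i j Hi Hj. unfold condb. rewrite !Hrv by auto. reflexivity. }
  assert (Iga : injn n (fun i => g (alpha P i))) by apply (T_uinj g P Hg HPg).
  assert (Ivg : injn n (beta g P)) by apply (T_vinj g P Hg HPg).
  rewrite (cocycle n w vfg), (cocycle n (fun i => f (alpha Q i)) (beta f Q)) in S1; auto.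
  rewrite (cocycle n ufg w), (cocycle n (fun i => g (alpha P i)) (beta g P)) in S2; auto.
  rewrite (cocycle n (fun i => f (alpha Q i)) (beta f Q)); auto.
  rewrite (cocycle n (fun i => g (alpha P i)) (beta g P)); auto.
  rewrite (cocycle n ufg vfg); auto.
  rewrite <- S1, <- S2.
  destruct (T n ufg), (T n w), (T n vfg), (XS (seq 0 n) (fun j => dbab g (alpha P j) (bnd P j))),
    (XS (seq 0 n) (fun k => dbab f (alpha Q k) (bnd Q k))); reflexivity.
Qed.

End Comp.

Theorem lemma3p8 : forall f g : R -> R, IET f -> IET g ->
  eps (fun x => f (g x)) = xorb (eps f) (eps g).
Proof.
  intros f g Hf Hg. destruct (IET_affine f Hf) as [F HF]. destruct (IET_affine g Hg) as [G HG].
  symmetry. apply (comp_main f g (proj1 Hf) (proj1 Hg) F G HF HG).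
Qed.
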